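(* Let $G$ be a group with a symmetric, finitely supported generating probability measure $\mu$, and suppose that $(G,\mu)$ admits at least one non-constant positive harmonic function. Then the set of positive harmonic functions on $(G,\mu)$ spans an infinite-dimensional real vector space.
   Context: $\mu$ is generating if the semigroup generated by $\operatorname{supp}\mu$ is $G$, symmetric if $\mu(g)=\mu(g^{-1})$. $f:G\to\mathbb{R}$ is harmonic if $f(x)=\sum_{s\in\operatorname{supp}\mu}\mu(s)f(xs)$ for all $x$; it is positive if it takes only positive values. *)

(* Defs.v *)
From Stdlib Require Import Reals List.
Open Scope R_scope.

Definition is_group (G : Type) (mul : G -> G -> G) (one : G) (inv : G -> G) : Prop :=
  (forall x y z, mul x (mul y z) = mul (mul x y) z) /\
  (forall x, mul one x = x) /\ (forall x, mul x one = x) /\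
  (forall x, mul (inv x) x = one) /\ (forall x, mul x (inv x) = one).

Definition sum_list (l : list R) : R := fold_right Rplus 0 l.

Definition support_list {G : Type} (mu : G -> R) (S : list G) : Prop :=
  NoDup S /\ forall g, mu g <> 0 <-> In g S.

Definition fin_supp_prob {G : Type} (mu : G -> R) : Prop :=
  (forall g, 0 <= mu g) /\
  exists S, support_list mu S /\ sum_list (map mu S) = 1.

Definition list_prod {G : Type} (mul : G -> G -> G) (one : G) (l : list G) : G :=
  fold_right mul one l.

Definition generating {G : Type} (mul : G -> G -> G) (one : G) (mu : G -> R) : Prop :=
  forall g, exists l : list G,
    l <> nil /\ Forall (fun s => mu s <> 0) l /\ g = list_prod mul one l.

Definition symmetric_measure {G : Type} (inv : G -> G) (mu : G -> R) : Prop :=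
  forall g, mu g = mu (inv g).

Definition harmonic {G : Type} (mul : G -> G -> G) (mu : G -> R) (f : G -> R) : Prop :=
  exists S, support_list mu S /\
    forall x, f x = sum_list (map (fun s => mu s * f (mul x s)) S).

Definition positive_fun {G : Type} (f : G -> R) : Prop := forall x, 0 < f x.

Definition pos_harmonic {G : Type} (mul : G -> G -> G) (mu : G -> R) (f : G -> R) : Prop :=
  harmonic mul mu f /\ positive_fun f.

Definition lin_indep {G : Type} (n : nat) (fs : nat -> G -> R) : Prop :=
  forall c : nat -> R,
    (forall x, sum_list (map (fun i => c i * fs i x) (seq 0 n)) = 0) ->
    forall i, (i < n)%nat -> c i = 0.

(* Main.v *)
Require Import Defs.
From Stdlib Require Import Reals List Lra Lia Permutation Classical ClassicalEpsilon.
Open Scope R_scope.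

Lemma sum_app (l1 l2 : list R) : sum_list (l1 ++ l2) = sum_list l1 + sum_list l2.
Proof. induction l1; simpl; [lra| rewrite IHl1; lra]. Qed.

Lemma sum_perm (l l' : list R) : Permutation l l' -> sum_list l = sum_list l'.
Proof. induction 1; simpl; lra. Qed.

Section Sums.
Context {A : Type}.

Lemma sum_plus (f g : A -> R) l :
  sum_list (map (fun s => f s + g s) l) = sum_list (map f l) + sum_list (map g l).
Proof. induction l; simpl; [lra| rewrite IHl; lra]. Qed.

Lemma sum_minus (f g : A -> R) l :
  sum_list (map (fun s => f s - g s) l) = sum_list (map f l) - sum_list (map g l).
Proof. induction l; simpl; [lra| rewrite IHl; lra]. Qed.

Lemma sum_scal (c : R) (f : A -> R) l :
  sum_list (map (fun s => c * f s) l) = c * sum_list (map f l).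
Proof. induction l; simpl; [lra| rewrite IHl; lra]. Qed.

Lemma sum_ext (f g : A -> R) l : (forall s, In s l -> f s = g s) ->
  sum_list (map f l) = sum_list (map g l).
Proof. induction l; simpl; intros H; auto. rewrite H, IHl; auto. Qed.

Lemma sum_le (f g : A -> R) l : (forall s, In s l -> f s <= g s) ->
  sum_list (map f l) <= sum_list (map g l).
Proof. induction l; simpl; intros H; [lra|]. specialize (IHl (fun s h => H s (or_intror h))).
  specialize (H a (or_introl eq_refl)). lra. Qed.

Lemma sum_nonneg (f : A -> R) l : (forall s, In s l -> 0 <= f s) -> 0 <= sum_list (map f l).
Proof. intros H. replace 0 with (sum_list (map (fun _ : A => 0) l)).
  apply sum_le; auto. clear H; induction l; simpl; auto; lra. Qed.

Lemma sum_zero_each (f : A -> R) l : (forall s, In s l -> 0 <= f s) ->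
  sum_list (map f l) = 0 -> forall s, In s l -> f s = 0.
Proof. induction l; simpl; intros H E s Hs; [contradiction|].
  assert (0 <= sum_list (map f l)) by (apply sum_nonneg; auto).
  assert (0 <= f a) by auto.
  destruct Hs as [<-|Hs]; [lra|]. apply IHl; auto. lra. Qed.

Lemma sum_cv (F : nat -> A -> R) (L : A -> R) l :
  (forall s, In s l -> Un_cv (fun n => F n s) (L s)) ->
  Un_cv (fun n => sum_list (map (F n) l)) (sum_list (map L l)).
Proof. induction l; simpl; intros H.
  - intros eps He. exists 0%nat. intros. unfold Rdist. rewrite Rminus_diag, Rabs_R0. lra.
  - apply CV_plus; auto. Qed.

Lemma sum_ge_term (f : A -> R) l s : (forall t, In t l -> 0 <= f t) -> In s l ->
  f s <= sum_list (map f l).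
Proof. induction l; simpl; intros H Hs; [contradiction|].
  destruct Hs as [<-|Hs].
  - assert (0 <= sum_list (map f l)) by (apply sum_nonneg; auto). lra.
  - assert (0 <= f a) by auto. specialize (IHl (fun t h => H t (or_intror h)) Hs). lra. Qed.

End Sums.

Lemma sum_split_at (f : nat -> R) (i : nat) l : In i l -> NoDup l ->
  sum_list (map f l) = f i + sum_list (map (fun j => if Nat.eq_dec j i then 0 else f j) l).
Proof. induction l as [|a l IH]; simpl; intros Hi Hn; [contradiction|].
  inversion Hn; subst. destruct Hi as [<-|Hi].
  - destruct (Nat.eq_dec a a); [|congruence].
    rewrite (sum_ext (fun j => if Nat.eq_dec j a then 0 else f j) f); [lra|].
    intros s Hs. destruct (Nat.eq_dec s a); auto. subst; contradiction.
  - rewrite (IH Hi H2). destruct (Nat.eq_dec a i); [subst; contradiction|]. lra. Qed.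

Lemma cv_const (c : R) : Un_cv (fun _ => c) c.
Proof. intros eps He. exists 0%nat. intros. unfold Rdist. rewrite Rminus_diag, Rabs_R0. lra. Qed.

Lemma lim_le (u : nat -> R) l b : Un_cv u l -> (forall n, u n <= b) -> l <= b.
Proof. intros H Hb. exact (Rle_cv_lim Hb H (cv_const b)). Qed.

Lemma lim_ge (u : nat -> R) l b : Un_cv u l -> (forall n, b <= u n) -> b <= l.
Proof. intros H Hb. exact (Rle_cv_lim Hb (cv_const b) H). Qed.

Lemma cv_shift (u : nat -> R) l : Un_cv u l -> Un_cv (fun n => u (S n)) l.
Proof. intros H eps He. destruct (H eps He) as [N HN]. exists N. intros. apply HN. lia. Qed.

Lemma sum_swap {A B : Type} (F : A -> B -> R) la lb :
  sum_list (map (fun a => sum_list (map (fun b => F a b) lb)) la) =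
  sum_list (map (fun b => sum_list (map (fun a => F a b) la)) lb).
Proof. induction la; simpl.
  - induction lb; simpl; auto. rewrite <- IHlb. lra.
  - rewrite IHla. rewrite <- sum_plus. auto. Qed.

Lemma NoDup_map_in {A B : Type} (f : A -> B) l :
  (forall a b, In a l -> In b l -> f a = f b -> a = b) -> NoDup l -> NoDup (map f l).
Proof. induction l; simpl; intros Hi Hn; constructor.
  - inversion Hn; subst. intro Hin. apply in_map_iff in Hin. destruct Hin as [b [Hb Hb']].
    assert (b = a) by (apply Hi; auto). subst. contradiction.
  - inversion Hn; subst. apply IHl; auto. Qed.

Lemma max_exists (P : nat -> Prop) M : (exists a, P a) -> (forall k, P k -> (k <= M)%nat) ->
  exists k, P k /\ forall k', P k' -> (k' <= k)%nat.
Proof. intros [a Ha] HB.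
  assert (K : forall j a, P a -> (M - a <= j)%nat -> exists k, P k /\ forall k', P k' -> (k' <= k)%nat).
  { induction j; intros a0 Ha0 Hj.
    - exists a0. split; auto. intros k' Hk'. pose proof (HB _ Hk'). pose proof (HB _ Ha0). lia.
    - destruct (classic (exists a', P a' /\ (a0 < a')%nat)) as [[a' [Ha' Hlt]]|Hn].
      + apply (IHj a'); auto. pose proof (HB _ Ha'). lia.
      + exists a0. split; auto. intros k' Hk'. apply NNPP; intro N. apply Hn. exists k'. split; auto. lia. }
  apply (K M a); auto. lia. Qed.

Lemma amgm k (a : nat -> R) : (0 < k)%nat -> (forall i, (i < k)%nat -> 0 < a i) ->
  let m := sum_list (map (fun i => ln (a i)) (seq 0 k)) / INR k in
  INR k * exp m <= sum_list (map a (seq 0 k)) /\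
  (INR k * exp m = sum_list (map a (seq 0 k)) -> forall i, (i < k)%nat -> a i = exp m).
Proof. intros Hk Ha m.
  assert (Hkr : 0 < INR k) by (apply lt_0_INR; lia).
  assert (Hterm : forall i, (i < k)%nat -> exp m * (1 + (ln (a i) - m)) <= a i).
  { intros i Hi. rewrite <- (exp_ln (a i)) at 2 by auto.
    replace (ln (a i)) with (m + (ln (a i) - m)) at 2 by lra. rewrite exp_plus.
    apply Rmult_le_compat_l; [pose proof (exp_pos m); lra| apply exp_ineq1_le]. }
  assert (Hsum : sum_list (map (fun i => exp m * (1 + (ln (a i) - m))) (seq 0 k)) = INR k * exp m).
  { rewrite sum_scal, sum_plus, sum_minus.
    rewrite (sum_ext (fun _ => m) (fun _ => m * 1)) by (intros; lra). rewrite sum_scal.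
    assert (L : forall n, sum_list (map (fun _ : nat => 1) (seq 0 n)) = INR n).
    { induction n; auto. rewrite seq_S, map_app, sum_app, IHn, S_INR. simpl. lra. }
    rewrite L. unfold m. field. lra. }
  split.
  - rewrite <- Hsum. apply sum_le. intros i Hi. apply in_seq in Hi. apply Hterm. lia.
  - intros Heq i Hi.
    assert (Hz : sum_list (map (fun i => a i - exp m * (1 + (ln (a i) - m))) (seq 0 k)) = 0).
    { rewrite sum_minus, Hsum. lra. }
    assert (Hnn : forall s, In s (seq 0 k) -> 0 <= a s - exp m * (1 + (ln (a s) - m))).
    { intros s Hs. apply in_seq in Hs. assert (s < k)%nat by lia. specialize (Hterm s H). lra. }
    assert (Hik : In i (seq 0 k)) by (apply in_seq; lia).
    pose proof (sum_zero_each _ _ Hnn Hz i Hik) as Hi0. simpl in Hi0.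
    destruct (Req_dec (ln (a i) - m) 0) as [H0|H0].
    + rewrite <- (exp_ln (a i)) by auto. f_equal. lra.
    + exfalso. pose proof (exp_ineq1 _ H0). pose proof (exp_pos m).
      assert (Ha' : a i = exp m * exp (ln (a i) - m)).
      { rewrite <- exp_plus. replace (m + (ln (a i) - m)) with (ln (a i)) by lra. rewrite exp_ln; auto. }
      set (z := ln (a i) - m) in *. rewrite Ha' in Hi0. nra. Qed.
Section Main.
Context {G : Type} (mul : G -> G -> G) (one : G) (inv : G -> G) (mu : G -> R) (S0 : list G).
Context (Hgrp : is_group G mul one inv).
Context (Hmupos : forall g, 0 <= mu g) (Hsupp : support_list mu S0)
        (Hsum1 : sum_list (map mu S0) = 1).
Context (Hsym : symmetric_measure inv mu) (Hgen : generating mul one mu).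

Lemma assoc x y z : mul x (mul y z) = mul (mul x y) z.
Proof. apply Hgrp. Qed.
Lemma one_l x : mul one x = x.
Proof. apply Hgrp. Qed.
Lemma one_r x : mul x one = x.
Proof. apply Hgrp. Qed.
Lemma inv_l x : mul (inv x) x = one.
Proof. apply Hgrp. Qed.
Lemma inv_r x : mul x (inv x) = one.
Proof. apply Hgrp. Qed.
Lemma cancel1 g x : mul (inv g) (mul g x) = x.
Proof. rewrite assoc, inv_l, one_l. auto. Qed.
Lemma cancel2 g x : mul g (mul (inv g) x) = x.
Proof. rewrite assoc, inv_r, one_l. auto. Qed.

Lemma inS s : In s S0 -> 0 < mu s.
Proof. intros H. destruct Hsupp as [_ Hs]. apply Hs in H. specialize (Hmupos s). lra. Qed.

Lemma gen' g : exists l, (forall s, In s l -> In s S0) /\ g = Defs.list_prod mul one l.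
Proof. destruct (Hgen g) as [l [_ [Hf ->]]]. exists l. split; auto.
  intros s Hs. rewrite Forall_forall in Hf. apply Hsupp. auto. Qed.

Definition Pop (h : G -> R) : G -> R := fun x => sum_list (map (fun s => mu s * h (mul x s)) S0).
Definition harm (h : G -> R) := forall x, h x = Pop h x.
Definition Cn (h : G -> R) := (forall x, 0 <= h x) /\ harm h.
Definition prop (u w : G -> R) := exists a, forall x, u x = a * w x.
Definition inF (h w : G -> R) := Cn w /\ exists c, forall x, w x <= c * h x.
Definition Ext (e : G -> R) := Cn e /\ (exists x, e x <> 0) /\ forall w, inF e w -> prop w e.

Lemma Pop_mono h1 h2 x : (forall y, h1 y <= h2 y) -> Pop h1 x <= Pop h2 x.
Proof. intros H. unfold Pop. apply sum_le. intros s _. apply Rmult_le_compat_l; auto. Qed.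

Lemma Pop_const c x : Pop (fun _ => c) x = c.
Proof. unfold Pop. rewrite (sum_ext (fun s => mu s * c) (fun s => c * mu s)) by (intros; lra).
  rewrite sum_scal, Hsum1. lra. Qed.

Lemma Pop_lin a b h1 h2 x : Pop (fun y => a * h1 y + b * h2 y) x = a * Pop h1 x + b * Pop h2 x.
Proof. unfold Pop.
  rewrite (sum_ext _ (fun s => a * (mu s * h1 (mul x s)) + b * (mu s * h2 (mul x s)))) by (intros; lra).
  rewrite sum_plus, !sum_scal. lra. Qed.

Lemma harm_lin a b h1 h2 : harm h1 -> harm h2 -> harm (fun y => a * h1 y + b * h2 y).
Proof. intros H1 H2 x. rewrite Pop_lin, <- H1, <- H2. auto. Qed.

Lemma harm_const c : harm (fun _ => c).
Proof. intros x. rewrite Pop_const. auto. Qed.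

Lemma harm_ext h1 h2 : harm h1 -> (forall x, h2 x = h1 x) -> harm h2.
Proof. intros H E x. rewrite E, H. unfold Pop. apply sum_ext. intros. rewrite E. auto. Qed.

Lemma Pop_term h x s : (forall y, 0 <= h y) -> In s S0 -> mu s * h (mul x s) <= Pop h x.
Proof. intros H Hs. unfold Pop. apply (sum_ge_term (fun s => mu s * h (mul x s))); auto.
  intros t _. apply Rmult_le_pos; auto. Qed.

Lemma Pop_nonneg h x : (forall y, 0 <= h y) -> 0 <= Pop h x.
Proof. intros H. rewrite <- (Pop_const 0 x). apply Pop_mono. auto. Qed.

Lemma lp_step y s l : mul y (Defs.list_prod mul one (s :: l)) = mul (mul y s) (Defs.list_prod mul one l).
Proof. simpl. apply assoc. Qed.

Lemma Cn_zero h y : Cn h -> h y = 0 -> forall z, h z = 0.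
Proof. intros [Hn Hh] Hy z.
  assert (K : forall l y, (forall s, In s l -> In s S0) -> h y = 0 -> h (mul y (Defs.list_prod mul one l)) = 0).
  { induction l as [|s l IH]; intros y0 Hl H0.
    - simpl. rewrite one_r. auto.
    - rewrite lp_step. apply IH; [intros; apply Hl; simpl; auto|].
      assert (Hs : In s S0) by (apply Hl; simpl; auto).
      pose proof (Pop_term h y0 s Hn Hs). pose proof (inS s Hs). rewrite <- Hh in H.
      specialize (Hn (mul y0 s)). nra. }
  destruct (gen' (mul (inv y) z)) as [l [Hl E]].
  rewrite <- (cancel2 y z), E. apply K; auto. Qed.

Lemma Cn_pos h : Cn h -> (exists x, h x <> 0) -> forall x, 0 < h x.
Proof. intros HC [x0 Hx0] x. destruct (Rle_lt_or_eq_dec 0 (h x)) as [H|H]; [apply HC|auto|].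
  exfalso. apply Hx0. apply (Cn_zero h x HC). auto. Qed.

Lemma harm_Pop h : harm h -> forall x, Pop h x = h x.
Proof. intros H x. auto. Qed.

Lemma Cn_sum (v : nat -> G -> R) m : (forall j, (j < m)%nat -> Cn (v j)) ->
  Cn (fun x => sum_list (map (fun j => v j x) (seq 0 m))).
Proof. induction m; intros H.
  - split; [simpl; intros; lra|]. apply (harm_ext (fun _ => 0)); [apply harm_const|]. simpl; auto.
  - assert (IH : Cn (fun x => sum_list (map (fun j => v j x) (seq 0 m)))) by (apply IHm; intros; apply H; lia).
    assert (Hm : Cn (v m)) by (apply H; lia).
    split.
    + intros x. rewrite seq_S, map_app, sum_app. simpl. pose proof (proj1 IH x). pose proof (proj1 Hm x). lra.
    + apply (harm_ext (fun x => 1 * sum_list (map (fun j => v j x) (seq 0 m)) + 1 * v m x)).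
      * apply harm_lin; [apply IH|apply Hm].
      * intros x. rewrite seq_S, map_app, sum_app. simpl. lra. Qed.

Fixpoint iter_P (m : G -> R) (n : nat) : G -> R :=
  match n with O => m | S k => Pop (iter_P m k) end.

Lemma Riesz e u v : Cn e -> Cn u -> Cn v -> (forall x, e x <= u x + v x) ->
  exists l, Cn l /\ (forall x, l x <= e x) /\ (forall x, l x <= u x) /\ (forall x, e x - v x <= l x).
Proof. intros [He0 He] [Hu0 Hu] [Hv0 Hv] Hle.
  set (m := fun x => Rmin (e x) (u x)).
  assert (Hnn : forall n x, 0 <= iter_P m n x).
  { induction n; intros x; simpl. - unfold m. apply Rmin_glb; auto. - apply Pop_nonneg; auto. }
  assert (Hue : forall n x, iter_P m n x <= e x /\ iter_P m n x <= u x).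
  { induction n; intros x; simpl.
    - unfold m; split; [apply Rmin_l|apply Rmin_r].
    - rewrite He, Hu. split; apply Pop_mono; intros; apply IHn. }
  assert (Hev : forall n x, e x - v x <= iter_P m n x).
  { assert (Hd : harm (fun y => 1 * e y + (-1) * v y)) by (apply harm_lin; auto).
    induction n; intros x; simpl.
    - unfold m. apply Rmin_glb. + specialize (Hv0 x); lra. + specialize (Hle x); lra.
    - replace (e x - v x) with (1 * e x + (-1) * v x) by lra. rewrite Hd.
      apply Pop_mono. intros y. specialize (IHn y). lra. }
  assert (Hdec : forall n x, iter_P m (S n) x <= iter_P m n x).
  { induction n; intros x.
    - simpl. unfold m at 2. apply Rmin_glb.
      + rewrite He. apply Pop_mono. intros; unfold m; apply Rmin_l.
      + rewrite Hu. apply Pop_mono. intros; unfold m; apply Rmin_r.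
    - simpl. apply Pop_mono. intros y. apply IHn. }
  assert (Hlim : forall x, { l | Un_cv (fun n => iter_P m n x) l }).
  { intros x. apply decreasing_cv.
    - intros n. apply Hdec.
    - exists 0. intros y [n ->]. unfold opp_seq. specialize (Hnn n x). lra. }
  set (l := fun x => proj1_sig (Hlim x)).
  assert (Hl : forall x, Un_cv (fun n => iter_P m n x) (l x)) by (intros x; apply (proj2_sig (Hlim x))).
  exists l. split; [split|split;[|split]].
  - intros x. apply (lim_ge _ _ _ (Hl x)). intros; apply Hnn.
  - intros x. apply (UL_sequence (fun n => iter_P m (S n) x)).
    + apply (cv_shift (fun n => iter_P m n x)). apply Hl.
    + simpl. unfold Pop. apply (sum_cv (fun n s => mu s * iter_P m n (mul x s))).
      intros s _. apply CV_mult; [apply cv_const| apply Hl].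
  - intros x. apply (lim_le _ _ _ (Hl x)). intros; apply Hue.
  - intros x. apply (lim_le _ _ _ (Hl x)). intros; apply Hue.
  - intros x. apply (lim_ge _ _ _ (Hl x)). intros; apply Hev. Qed.

Lemma Cn_scal a h : 0 <= a -> Cn h -> Cn (fun x => a * h x).
Proof. intros Ha [H0 H]. split. - intros x; apply Rmult_le_pos; auto.
  - apply (harm_ext (fun x => a * h x + 0 * h x)); [apply harm_lin; auto|]. intros; lra. Qed.

Lemma Cn_zero_fun : Cn (fun _ => 0).
Proof. split; [intros; lra| apply harm_const]. Qed.

Lemma Ext_pos e : Ext e -> forall x, 0 < e x.
Proof. intros [HC [Hz _]]. apply Cn_pos; auto. Qed.

Definition NP (e v : G -> R) := forall w, inF e w -> (forall x, w x <= v x) -> forall x, w x = 0.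

Lemma sumNP m e (v : nat -> G -> R) : Cn e -> (exists x, e x <> 0) ->
  (forall j, (j < m)%nat -> Cn (v j)) -> (forall j, (j < m)%nat -> NP e (v j)) ->
  (forall x, e x <= sum_list (map (fun j => v j x) (seq 0 m))) -> False.
Proof. intros HCe Hnz. induction m; intros HC HN Hle.
  - destruct Hnz as [x0 Hx0]. apply Hx0. simpl in Hle. specialize (Hle x0). pose proof (proj1 HCe x0). lra.
  - assert (Hrest : Cn (fun x => sum_list (map (fun j => v j x) (seq 0 m)))) by (apply Cn_sum; intros; apply HC; lia).
    destruct (Riesz e (v m) (fun x => sum_list (map (fun j => v j x) (seq 0 m))) HCe (HC m ltac:(lia)) Hrest)
      as [l [HCl [Hl1 [Hl2 Hl3]]]].
    { intros x. specialize (Hle x). rewrite seq_S, map_app, sum_app in Hle. simpl in Hle. lra. }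
    assert (Hl0 : forall x, l x = 0).
    { apply (HN m ltac:(lia)); auto. split; auto. exists 1. intros; specialize (Hl1 x); lra. }
    apply IHm.
    + intros; apply HC; lia.
    + intros; apply HN; lia.
    + intros x. specialize (Hl3 x). rewrite Hl0 in Hl3. lra. Qed.

Lemma ext_indep m (r : nat -> G -> R) : (forall i, (i < m)%nat -> Ext (r i)) ->
  (forall i j, (i < m)%nat -> (j < m)%nat -> i <> j -> ~ prop (r i) (r j)) -> lin_indep m r.
Proof. intros HE HP c Hc i Hi. apply NNPP; intro Hci.
  set (d := fun j => if Rlt_dec 0 (c i) then c j else - c j).
  assert (Hdi : 0 < d i) by (unfold d; destruct (Rlt_dec 0 (c i)); lra).
  assert (Hd : forall x, sum_list (map (fun j => d j * r j x) (seq 0 m)) = 0).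
  { intros x. unfold d. destruct (Rlt_dec 0 (c i)); [apply Hc|].
    rewrite (sum_ext _ (fun j => (-1) * (c j * r j x))) by (intros; lra).
    rewrite sum_scal, Hc. lra. }
  set (v := fun j x => if Nat.eq_dec j i then 0 else Rmax 0 (- d j / d i) * r j x).
  apply (sumNP m (r i) v).
  - apply HE; auto.
  - apply HE; auto.
  - intros j Hj. unfold v. destruct (Nat.eq_dec j i).
    + apply Cn_zero_fun.
    + apply Cn_scal; [apply Rmax_l| apply HE; auto].
  - intros j Hj w [HCw [cw Hw]] Hwv x. unfold v in Hwv. destruct (Nat.eq_dec j i).
    + specialize (Hwv x). pose proof (proj1 HCw x). lra.
    + apply NNPP; intro Hwx.
      destruct (proj2 (proj2 (HE i Hi)) w) as [b Hb]. { split; auto. exists cw; auto. }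
      destruct (proj2 (proj2 (HE j Hj)) w) as [b' Hb']. { split; auto. exists (Rmax 0 (- d j / d i)); auto. }
      assert (Hb0 : b <> 0). { intro; subst. apply Hwx. rewrite Hb. lra. }
      apply (HP i j Hi Hj (not_eq_sym n)). exists (b' / b). intros y.
      assert (b * r i y = b' * r j y) by (rewrite <- Hb, <- Hb'; auto).
      field_simplify; auto. rewrite <- H. field. auto.
  - intros x. specialize (Hd x).
    rewrite (sum_split_at (fun j => d j * r j x) i) in Hd by (try apply in_seq; try lia; apply seq_NoDup).
    assert (E : r i x = sum_list (map (fun j => if Nat.eq_dec j i then 0 else - (d j / d i) * r j x) (seq 0 m))).
    { rewrite (sum_ext _ (fun j => (- / d i) * (if Nat.eq_dec j i then 0 else d j * r j x))).
      - rewrite sum_scal. apply (Rmult_eq_reg_l (d i)); [|lra]. field_simplify; [|lra]. lra.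
      - intros j _. destruct (Nat.eq_dec j i); [lra|]. field. lra. }
    rewrite E. apply sum_le. intros j Hj. apply in_seq in Hj. unfold v. destruct (Nat.eq_dec j i); [lra|].
    pose proof (Ext_pos (r j) (HE j ltac:(lia)) x).
    apply Rmult_le_compat_r; [lra|]. unfold Rdiv. rewrite <- Ropp_mult_distr_l. apply Rmax_r. Qed.

Lemma inF_nonneg_c h w : Cn h -> inF h w -> exists c, 0 <= c /\ forall x, w x <= c * h x.
Proof. intros [Hh _] [_ [c Hc]]. exists (Rmax 0 c). split; [apply Rmax_l|].
  intros x. specialize (Hc x). pose proof (Hh x). pose proof (Rmax_r 0 c).
  apply (Rle_trans _ _ _ Hc). apply Rmult_le_compat_r; auto. Qed.

Lemma inF_trans h h' w : Cn h -> Cn h' -> (forall x, h' x <= h x) -> inF h' w -> inF h w.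
Proof. intros Hh Hh' Hle Hw. destruct (inF_nonneg_c h' w Hh' Hw) as [c [Hc0 Hc]].
  split; [apply Hw|]. exists c. intros x. specialize (Hc x). specialize (Hle x). nra. Qed.

Lemma span_bound h' (fs : nat -> G -> R) (a : nat -> R) m : Cn h' ->
  (forall i, (i < m)%nat -> inF h' (fs i)) ->
  exists K, 0 <= K /\ forall x, sum_list (map (fun j => a j * fs j x) (seq 0 m)) <= K * h' x.
Proof. intros Hh. induction m; intros Hf.
  - exists 0. split; [lra|]. intros x. simpl. pose proof (proj1 Hh x). lra.
  - destruct IHm as [K [HK0 HK]]; [intros; apply Hf; lia|].
    destruct (inF_nonneg_c h' (fs m) Hh (Hf m ltac:(lia))) as [c [Hc0 Hc]].
    exists (K + Rabs (a m) * c). split; [pose proof (Rabs_pos (a m)); nra|].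
    intros x. rewrite seq_S, map_app, sum_app. simpl.
    specialize (HK x). specialize (Hc x). pose proof (proj1 (proj1 (Hf m ltac:(lia))) x).
    pose proof (proj1 Hh x). pose proof (Rabs_pos (a m)).
    assert (a m * fs m x <= Rabs (a m) * fs m x).
    { apply Rmult_le_compat_r; auto. apply RRle_abs. }
    assert (Rabs (a m) * fs m x <= Rabs (a m) * (c * h' x)) by (apply Rmult_le_compat_l; auto).
    nra. Qed.

Lemma step_lemma h w : Cn h -> (exists x, h x <> 0) -> inF h w -> ~ prop w h ->
  exists h', Cn h' /\ (exists x, h' x <> 0) /\ (forall x, h' x <= h x) /\
   forall m' (fs : nat -> G -> R), (forall i, (i < m')%nat -> inF h' (fs i)) -> lin_indep m' fs ->
     exists fs', (forall i, (i < S m')%nat -> inF h (fs' i)) /\ lin_indep (S m') fs'.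
Proof. intros Hh Hhnz Hw Hnp.
  assert (Hwnz : exists x, w x <> 0).
  { apply NNPP; intro N. apply Hnp. exists 0. intros x. apply NNPP; intro N2. apply N. exists x. lra. }
  assert (Hwp := Cn_pos w (proj1 Hw) Hwnz).
  assert (Hhp := Cn_pos h Hh Hhnz).
  set (E := fun t => forall x, t * w x <= h x).
  assert (HEb : bound E).
  { exists (h one / w one). intros t Ht. specialize (Ht one). specialize (Hwp one).
    apply (Rmult_le_reg_r (w one)); auto. unfold Rdiv. rewrite Rmult_assoc, Rinv_l; lra. }
  assert (HE0 : E 0). { intros x. pose proof (proj1 Hh x). lra. }
  destruct (completeness E HEb (ex_intro _ 0 HE0)) as [T [HT1 HT2]].
  assert (HT : forall x, T * w x <= h x).
  { intros x. assert (T <= h x / w x).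
    { apply HT2. intros t Ht. specialize (Ht x). specialize (Hwp x).
      apply (Rmult_le_reg_r (w x)); auto. unfold Rdiv. rewrite Rmult_assoc, Rinv_l; lra. }
    specialize (Hwp x). apply (Rmult_le_compat_r (w x)) in H; [|lra].
    unfold Rdiv in H. rewrite Rmult_assoc, Rinv_l in H; lra. }
  assert (HT0 : 0 <= T) by (apply HT1; auto).
  set (h' := fun x => h x - T * w x).
  assert (Hh' : Cn h').
  { split. - intros x; unfold h'; specialize (HT x); lra.
    - apply (harm_ext (fun x => 1 * h x + (- T) * w x)); [apply harm_lin; [apply Hh|apply Hw]|].
      intros; unfold h'; lra. }
  assert (Hnot : forall K, 0 <= K -> ~ (forall x, w x <= K * h' x)).
  { intros K HK H. assert (HE' : E (T + / (K + 1))).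
    { intros x. specialize (H x). specialize (Hwp x). unfold h' in H.
      assert (0 <= h' x) by apply Hh'. unfold h' in H0.
      assert (w x <= (K + 1) * (h x - T * w x)) by nra.
      assert (0 < / (K+1)) by (apply Rinv_0_lt_compat; lra).
      apply (Rmult_le_reg_l (K+1)); [lra|].
      replace ((K + 1) * ((T + / (K + 1)) * w x)) with ((K+1) * T * w x + w x) by (field; lra). nra. }
    specialize (HT1 _ HE'). assert (0 < / (K+1)) by (apply Rinv_0_lt_compat; lra). lra. }
  exists h'. split; [auto|split;[|split]].
  - apply NNPP; intro N. apply Hnp. exists (/ T).
    assert (Hz : forall x, h x = T * w x). { intros x. apply NNPP; intro N2. apply N. exists x. unfold h'. lra. }
    assert (T <> 0). { intro HT'. destruct Hhnz as [x0 Hx0]. apply Hx0. rewrite Hz, HT'. lra. }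
    intros x. rewrite Hz. field. auto.
  - intros x. unfold h'. specialize (Hwp x). nra.
  - intros m' fs Hfs Hind.
    exists (fun i => if Nat.eq_dec i m' then w else fs i). split.
    + intros i Hi. destruct (Nat.eq_dec i m'); [auto|].
      apply (inF_trans h h'); auto. * intros x; unfold h'; specialize (Hwp x); nra. * apply Hfs; lia.
    + intros c Hc.
      assert (Hc' : forall x, sum_list (map (fun j => c j * fs j x) (seq 0 m')) + c m' * w x = 0).
      { intros x. specialize (Hc x). rewrite seq_S, map_app, sum_app in Hc. simpl in Hc.
        destruct (Nat.eq_dec m' m'); [|congruence].
        rewrite (sum_ext _ (fun j => if Nat.eq_dec j m' then c j * w x else c j * fs j x)).
        - rewrite (sum_ext (fun j => if Nat.eq_dec j m' then c j * w x else c j * fs j x) (fun j => c j * (if Nat.eq_dec j m' then w else fs j) x)); [lra|].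
          intros j _. destruct (Nat.eq_dec j m'); auto.
        - intros j Hj. apply in_seq in Hj. destruct (Nat.eq_dec j m'); [lia|auto]. }
      assert (Hcm : c m' = 0).
      { apply NNPP; intro N.
        destruct (span_bound h' fs (fun j => - c j / c m') m' Hh' Hfs) as [K [HK0 HK]].
        apply (Hnot K HK0). intros x. specialize (HK x). specialize (Hc' x).
        rewrite (sum_ext _ (fun j => (- / c m') * (c j * fs j x))) in HK by (intros; unfold Rdiv; lra).
        rewrite sum_scal in HK.
        replace (w x) with (- / c m' * sum_list (map (fun j => c j * fs j x) (seq 0 m'))); [auto|].
        apply (Rmult_eq_reg_l (c m')); auto. field_simplify; auto. lra. }
      intros i Hi. destruct (Nat.eq_dec i m'); [subst; auto|].
      apply (Hind c); [|lia]. intros x. specialize (Hc' x). rewrite Hcm in Hc'. lra. Qed.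

Lemma indep_one (h : G -> R) : (exists x, h x <> 0) -> lin_indep 1 (fun _ => h).
Proof. intros [x0 Hx0] c Hc i Hi. assert (i = 0%nat) by lia. subst. specialize (Hc x0). simpl in Hc.
  apply NNPP; intro N. apply Hx0. apply (Rmult_eq_reg_l (c 0%nat)); auto. lra. Qed.

Lemma ext_exists M : forall h, Cn h -> (exists x, h x <> 0) ->
  (forall m' (fs : nat -> G -> R), (forall i, (i < m')%nat -> inF h (fs i)) -> lin_indep m' fs -> (m' <= M)%nat) ->
  exists e, Ext e /\ inF h e.
Proof. induction M; intros h Hh Hnz HB.
  - exfalso. assert (1 <= 0)%nat; [|lia]. apply (HB 1%nat (fun _ => h)); [|apply indep_one; auto].
    intros. split; auto. exists 1. intros; lra.
  - destruct (classic (forall w, inF h w -> prop w h)) as [Hx|Hx].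
    + exists h. split; [split; auto|]. split; auto. exists 1. intros; lra.
    + apply not_all_ex_not in Hx. destruct Hx as [w Hw]. apply imply_to_and in Hw. destruct Hw as [Hw Hnp].
      destruct (step_lemma h w Hh Hnz Hw Hnp) as [h' [Hh' [Hnz' [Hle Hext]]]].
      destruct (IHM h' Hh' Hnz') as [e [He Hin]].
      * intros m' fs Hf Hi. destruct (Hext m' fs Hf Hi) as [fs' [Hf' Hi']].
        specialize (HB _ fs' Hf' Hi'). lia.
      * exists e. split; auto. apply (inF_trans h h'); auto. Qed.

Lemma harm_L g h : harm h -> harm (fun x => h (mul g x)).
Proof. intros H x. rewrite H. unfold Pop. apply sum_ext. intros. rewrite assoc. auto. Qed.

Lemma Cn_L g h : Cn h -> Cn (fun x => h (mul g x)).
Proof. intros [H0 H]. split; [intros; apply H0| apply harm_L; auto]. Qed.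

Lemma Ext_L g e : Ext e -> Ext (fun x => e (mul g x)).
Proof. intros [HC [[x0 Hx0] HP]]. split; [apply Cn_L; auto|]. split.
  - exists (mul (inv g) x0). rewrite cancel2. auto.
  - intros w [HCw [c Hc]]. destruct (HP (fun x => w (mul (inv g) x))) as [a Ha].
    + split; [apply Cn_L; auto|]. exists c. intros x. specialize (Hc (mul (inv g) x)). rewrite cancel2 in Hc. auto.
    + exists a. intros y. specialize (Ha (mul g y)). simpl in Ha. rewrite cancel1 in Ha. auto. Qed.

Lemma Ext_scal a e : 0 < a -> Ext e -> Ext (fun x => a * e x).
Proof. intros Ha [HC [[x0 Hx0] HP]]. split; [apply Cn_scal; auto; lra|]. split.
  - exists x0. intro H. apply Rmult_integral in H. destruct H; [lra|auto].
  - intros w [HCw [c Hc]]. destruct (HP w) as [b Hb].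
    + split; auto. exists (c * a). intros x. specialize (Hc x). lra.
    + exists (b / a). intros x. rewrite Hb. field. lra. Qed.

Lemma prop_sym u w : (forall x, 0 < u x) -> prop u w -> prop w u.
Proof. intros Hu [a Ha]. assert (a <> 0). { intro; subst. specialize (Hu one). rewrite Ha in Hu. lra. }
  exists (/ a). intros x. rewrite Ha. field. auto. Qed.

Lemma inv_inv x : inv (inv x) = x.
Proof. rewrite <- (one_r (inv (inv x))), <- (inv_l x), assoc, inv_l, one_l. auto. Qed.

Lemma perm_inv : Permutation (map inv S0) S0.
Proof. apply NoDup_Permutation_bis.
  - apply FinFun.Injective_map_NoDup; [|apply Hsupp].
    intros a b H. rewrite <- (inv_inv a), <- (inv_inv b), H. auto.
  - rewrite length_map. auto.
  - intros y Hy. apply in_map_iff in Hy. destruct Hy as [s [<- Hs]]. apply Hsupp.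
    rewrite <- Hsym. apply Hsupp. auto. Qed.

Lemma ext_const M e :
  (forall m (fs : nat -> G -> R), (forall i, (i < m)%nat -> Cn (fs i)) -> lin_indep m fs -> (m <= M)%nat) ->
  Ext e -> forall x, e x = e one.
Proof. intros HB He.
  pose proof (Ext_pos e He) as Hep.
  set (N := fun g x => / e g * e (mul g x)).
  assert (HNE : forall g, Ext (N g)).
  { intros g. apply Ext_scal; [apply Rinv_0_lt_compat; auto|]. apply Ext_L; auto. }
  assert (HN1 : forall g, N g one = 1). { intros g. unfold N. rewrite one_r. field. specialize (Hep g); lra. }
  assert (HNp : forall g x, 0 < N g x) by (intros; apply Ext_pos; auto).
  set (Q := fun k => exists gs : nat -> G, forall i j, (i < k)%nat -> (j < k)%nat -> i <> j ->
                                  ~ prop (N (gs i)) (N (gs j))).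
  assert (HQb : forall k, Q k -> (k <= M)%nat).
  { intros k [gs Hgs]. apply (HB k (fun i => N (gs i))).
    - intros i _. apply HNE.
    - apply ext_indep; auto. }
  destruct (max_exists Q M) as [k [[gs Hgs] Hmax]]; auto.
  { exists 1%nat. exists (fun _ => one). intros. lia. }
  assert (Hk1 : (1 <= k)%nat).
  { apply Hmax. exists (fun _ => one). intros. lia. }
  assert (Hcover : forall g, exists j, (j < k)%nat /\ prop (N g) (N (gs j))).
  { intros g. apply NNPP; intro Hn.
    assert (HQ : Q (S k)).
    { exists (fun i => if Nat.eq_dec i k then g else gs i). intros i j Hi Hj Hij.
      destruct (Nat.eq_dec i k); destruct (Nat.eq_dec j k).
      - lia.
      - intro P. apply Hn. exists j. split; [lia|auto].
      - intro P. apply Hn. exists i. split; [lia|]. apply prop_sym; auto.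
      - apply Hgs; lia. }
    specialize (Hmax _ HQ). lia. }
  set (r := fun i => N (gs i)).
  assert (Hrp : forall i x, 0 < r i x) by (intros; apply HNp).
  assert (Hr1 : forall i, r i one = 1) by (intros; apply HN1).
  assert (Hkey : forall g i, (i < k)%nat -> exists j, (j < k)%nat /\ forall x, r i (mul g x) = r i g * r j x).
  { intros g i Hi. destruct (Hcover (mul (gs i) g)) as [j [Hj [a Ha]]].
    assert (E : forall x, r i (mul g x) = r i g * N (mul (gs i) g) x).
    { intros x. unfold r, N. rewrite assoc. field.
      pose proof (Hep (gs i)); pose proof (Hep (mul (gs i) g)). split; lra. }
    assert (a = 1). { specialize (Ha one). rewrite HN1 in Ha. fold (r j) in Ha. rewrite Hr1 in Ha. lra. }
    subst a. exists j. split; auto. intros x. rewrite E, Ha. fold (r j). lra. }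
  set (th := fun x => sum_list (map (fun i => ln (r i x)) (seq 0 k))).
  assert (Hth : forall g x, th (mul g x) = th g + th x).
  { intros g x.
    assert (Hex : forall i, exists j, (i < k)%nat -> (j < k)%nat /\ forall y, r i (mul g y) = r i g * r j y).
    { intros i. destruct (Compare_dec.lt_dec i k) as [l|l].
      - destruct (Hkey g i l) as [j Hj]. exists j. auto.
      - exists 0%nat. intros; lia. }
    set (sg := fun i => proj1_sig (constructive_indefinite_description _ (Hex i))).
    assert (Hsg : forall i, (i < k)%nat -> (sg i < k)%nat /\ forall y, r i (mul g y) = r i g * r (sg i) y).
    { intros i Hi. exact (proj2_sig (constructive_indefinite_description _ (Hex i)) Hi). }
    assert (Hperm : Permutation (map sg (seq 0 k)) (seq 0 k)).
    { apply NoDup_Permutation_bis.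
      - apply NoDup_map_in; [|apply seq_NoDup].
        intros a b Ha Hb Hab. apply in_seq in Ha. apply in_seq in Hb.
        apply NNPP; intro Hne. apply (Hgs a b ltac:(lia) ltac:(lia) Hne).
        destruct (Hsg a ltac:(lia)) as [_ Ea]. destruct (Hsg b ltac:(lia)) as [_ Eb].
        exists (r a g / r b g). intros y. fold (r a) (r b).
        specialize (Ea (mul (inv g) y)). specialize (Eb (mul (inv g) y)).
        rewrite cancel2 in Ea, Eb. rewrite Ea, Eb, Hab. field. specialize (Hrp b g). lra.
      - rewrite length_map. auto.
      - intros y Hy. apply in_map_iff in Hy. destruct Hy as [i [<- Hi]]. apply in_seq in Hi.
        apply in_seq. destruct (Hsg i ltac:(lia)). lia. }
    unfold th. rewrite (sum_ext _ (fun i => ln (r i g) + ln (r (sg i) x))).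
    - rewrite sum_plus. f_equal.
      rewrite <- (map_map sg (fun j => ln (r j x))). apply sum_perm. apply Permutation_map. auto.
    - intros i Hi. apply in_seq in Hi. destruct (Hsg i ltac:(lia)) as [_ Ei]. rewrite Ei.
      apply ln_mult; auto. }
  assert (Hth1 : th one = 0).
  { unfold th. rewrite (sum_ext _ (fun _ => 0 * 0)). - rewrite sum_scal. lra.
    - intros i _. rewrite Hr1, ln_1. lra. }
  assert (Hthinv : forall s, th (inv s) = - th s).
  { intros s. pose proof (Hth s (inv s)). rewrite inv_r, Hth1 in H. lra. }
  assert (HSth : sum_list (map (fun s => mu s * th s) S0) = 0).
  { assert (E : sum_list (map (fun s => mu s * th s) S0) = - sum_list (map (fun s => mu s * th s) S0)).
    { assert (E1 : sum_list (map (fun s => mu s * th s) (map inv S0)) = sum_list (map (fun s => mu s * th s) S0))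
        by (apply sum_perm; apply Permutation_map; apply perm_inv).
      rewrite <- E1 at 1. rewrite map_map.
      rewrite (sum_ext _ (fun s => (-1) * (mu s * th s))). { rewrite sum_scal. lra. }
      intros s _. rewrite Hthinv, <- Hsym. lra. }
    lra. }
  assert (Hkr : 0 < INR k) by (apply lt_0_INR; lia).
  set (Ex := fun s => exp (th s / INR k)).
  set (Av := fun s => sum_list (map (fun i => r i s) (seq 0 k)) / INR k).
  assert (Hb : forall s, 1 + th s / INR k <= Ex s) by (intros; apply exp_ineq1_le).
  assert (Hc : forall s, Ex s <= Av s).
  { intros s. destruct (amgm k (fun i => r i s) ltac:(lia) (fun i _ => Hrp i s)) as [H1 _].
    unfold Av, Ex. apply (Rmult_le_reg_l (INR k)); auto. unfold Rdiv at 2. field_simplify; [|lra].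
    unfold th. lra. }
  assert (HsumAv : sum_list (map (fun s => mu s * Av s) S0) = 1).
  { unfold Av. rewrite (sum_ext _ (fun s => / INR k * sum_list (map (fun i => mu s * r i s) (seq 0 k)))).
    - rewrite sum_scal. rewrite (sum_swap (fun s i => mu s * r i s)).
      rewrite (sum_ext _ (fun _ => 1 * 1)).
      + rewrite sum_scal. assert (L : forall n, sum_list (map (fun _ : nat => 1) (seq 0 n)) = INR n).
        { induction n; auto. rewrite seq_S, map_app, sum_app, IHn, S_INR. simpl. lra. }
        rewrite L. field. lra.
      + intros i _. destruct (HNE (gs i)) as [[_ Hh] _]. specialize (Hh one). fold (r i) in Hh.
        rewrite Hr1 in Hh. unfold Pop in Hh.
        rewrite (sum_ext _ (fun s => mu s * r i (mul one s))); [lra|]. intros; rewrite one_l; auto.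
    - intros s _. rewrite (sum_scal (mu s) (fun i => r i s)). unfold Rdiv. ring. }
  assert (HsumB : sum_list (map (fun s => mu s * (1 + th s / INR k)) S0) = 1).
  { rewrite (sum_ext _ (fun s => mu s + / INR k * (mu s * th s))) by (intros; unfold Rdiv; lra).
    rewrite sum_plus, sum_scal, HSth, Hsum1. lra. }
  assert (Hle1 : sum_list (map (fun s => mu s * (1 + th s / INR k)) S0) <= sum_list (map (fun s => mu s * Ex s) S0)).
  { apply sum_le. intros s _. apply Rmult_le_compat_l; auto. }
  assert (Hle2 : sum_list (map (fun s => mu s * Ex s) S0) <= sum_list (map (fun s => mu s * Av s) S0)).
  { apply sum_le. intros s _. apply Rmult_le_compat_l; auto. }
  assert (Hrs : forall s, In s S0 -> forall i, (i < k)%nat -> r i s = 1).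
  { intros s Hs i Hi.
    assert (Z1 : sum_list (map (fun s => mu s * (Av s - Ex s)) S0) = 0).
    { rewrite (sum_ext _ (fun s => mu s * Av s - mu s * Ex s)) by (intros; lra). rewrite sum_minus. lra. }
    assert (Z2 : sum_list (map (fun s => mu s * (Ex s - (1 + th s / INR k))) S0) = 0).
    { rewrite (sum_ext _ (fun s => mu s * Ex s - mu s * (1 + th s / INR k))) by (intros; lra). rewrite sum_minus. lra. }
    assert (N1 : forall t, In t S0 -> 0 <= mu t * (Av t - Ex t)).
    { intros t _. apply Rmult_le_pos; auto. specialize (Hc t); lra. }
    assert (N2 : forall t, In t S0 -> 0 <= mu t * (Ex t - (1 + th t / INR k))).
    { intros t _. apply Rmult_le_pos; auto. specialize (Hb t); lra. }
    pose proof (sum_zero_each _ _ N1 Z1 s Hs) as E1.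
    pose proof (sum_zero_each _ _ N2 Z2 s Hs) as E2.
    simpl in E1, E2. pose proof (inS s Hs) as Hms.
    assert (F1 : Av s = Ex s). { apply Rmult_integral in E1. destruct E1; lra. }
    assert (F2 : Ex s = 1 + th s / INR k). { apply Rmult_integral in E2. destruct E2; lra. }
    assert (F3 : th s / INR k = 0).
    { destruct (Req_dec (th s / INR k) 0); auto. pose proof (exp_ineq1 _ H). unfold Ex in F2. lra. }
    assert (F4 : Ex s = 1) by lra.
    destruct (amgm k (fun i => r i s) ltac:(lia) (fun i _ => Hrp i s)) as [_ H2].
    change (sum_list (map (fun i0 => ln (r i0 s)) (seq 0 k))) with (th s) in H2.
    assert (HE : INR k * exp (th s / INR k) = sum_list (map (fun i => r i s) (seq 0 k))).
    { unfold Av, Ex in F1. rewrite <- F1. field. lra. }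
    rewrite (H2 HE i Hi). exact F4. }
  assert (Hall : forall l, (forall s, In s l -> In s S0) -> forall i, (i < k)%nat -> r i (Defs.list_prod mul one l) = 1).
  { induction l as [|s l IH]; intros Hl i Hi.
    - apply Hr1.
    - change (Defs.list_prod mul one (s :: l)) with (mul s (Defs.list_prod mul one l)).
      destruct (Hkey s i Hi) as [j [Hj Ej]]. rewrite Ej.
      rewrite (Hrs s ltac:(apply Hl; simpl; auto) i Hi), (IH ltac:(intros; apply Hl; simpl; auto) j Hj). lra. }
  intros x. destruct (Hcover one) as [j [Hj [a Ha]]].
  assert (Hrj : forall y, r j y = 1).
  { intros y. destruct (gen' y) as [l [Hl ->]]. apply Hall; auto. }
  assert (a = 1). { specialize (Ha one). rewrite HN1 in Ha. fold (r j) in Ha. rewrite Hrj in Ha. lra. }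
  subst a. specialize (Ha x). fold (r j) in Ha. rewrite Hrj in Ha. unfold N in Ha. rewrite one_l in Ha.
  pose proof (Hep one). apply (Rmult_eq_reg_l (/ e one)); [rewrite Ha; field; lra|apply Rinv_neq_0_compat; lra]. Qed.

Lemma harmonic_harm f : harmonic mul mu f -> harm f.
Proof. intros [S [HS Hf]] x. rewrite Hf. unfold Pop. apply sum_perm. apply Permutation_map.
  apply NoDup_Permutation; [apply HS|apply Hsupp|]. intros y. rewrite <- (proj2 HS), <- (proj2 Hsupp). tauto. Qed.

Lemma restrict m n (fs : nat -> G -> R) : lin_indep m fs -> (n <= m)%nat -> lin_indep n fs.
Proof. intros H Hnm c Hc i Hi.
  set (c' := fun j => if Compare_dec.lt_dec j n then c j else 0).
  assert (E : forall x, sum_list (map (fun j => c' j * fs j x) (seq 0 m)) = 0).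
  { intros x. replace m with (n + (m - n))%nat by lia. rewrite seq_app, map_app, sum_app.
    rewrite (sum_ext _ (fun j => c j * fs j x)).
    - rewrite Hc. rewrite (sum_ext _ (fun _ => 0 * 0)). + rewrite sum_scal. lra.
      + intros j Hj. apply in_seq in Hj. unfold c'. destruct (Compare_dec.lt_dec j n); [lia|lra].
    - intros j Hj. apply in_seq in Hj. unfold c'. destruct (Compare_dec.lt_dec j n); [auto|lia]. }
  specialize (H c' E i ltac:(lia)). unfold c' in H. destruct (Compare_dec.lt_dec i n); [auto|lia]. Qed.

Lemma indep_nonzero m (fs : nat -> G -> R) i : lin_indep m fs -> (i < m)%nat -> exists x, fs i x <> 0.
Proof. intros H Hi. apply NNPP; intro N.
  assert (Z : forall x, fs i x = 0). { intros x. apply NNPP; intro N2. apply N. exists x. auto. }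
  set (c := fun j => if Nat.eq_dec j i then 1 else 0).
  assert (c i = 0); [|unfold c in H0; destruct (Nat.eq_dec i i); [lra|congruence]].
  apply (H c); auto. intros x.
  rewrite (sum_split_at (fun j => c j * fs j x) i) by (try apply in_seq; try lia; apply seq_NoDup).
  rewrite Z. rewrite (sum_ext _ (fun _ => 0 * 0)). - rewrite sum_scal. lra.
  - intros j _. unfold c. destruct (Nat.eq_dec j i); lra. Qed.

Lemma main_core n : (exists f, pos_harmonic mul mu f /\ exists x y, f x <> f y) ->
  exists fs : nat -> G -> R, (forall i, (i < n)%nat -> pos_harmonic mul mu (fs i)) /\ lin_indep n fs.
Proof. intros [f [[Hfh Hfp] [x1 [y1 Hxy]]]]. apply NNPP; intro Hno.
  assert (HB : forall m (fs : nat -> G -> R), (forall i, (i < m)%nat -> Cn (fs i)) -> lin_indep m fs -> (m <= n)%nat).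
  { intros m fs HC Hi. destruct (Compare_dec.le_lt_dec m n) as [l|l]; auto. exfalso. apply Hno.
    exists fs. split; [|apply (restrict m); auto; lia].
    intros i Hin. split.
    - exists S0. split; auto. apply HC. lia.
    - intros x. apply Cn_pos; [apply HC; lia| apply (indep_nonzero m); auto; lia]. }
  pose proof (harmonic_harm f Hfh) as Hf.
  set (E := fun t => forall x, t <= f x).
  assert (HEb : bound E) by (exists (f one); intros t Ht; apply Ht).
  assert (HE0 : E 0) by (intros x; specialize (Hfp x); lra).
  destruct (completeness E HEb (ex_intro _ 0 HE0)) as [T [HT1 HT2]].
  assert (HT : forall x, T <= f x) by (intros x; apply HT2; intros t Ht; apply Ht).
  set (h := fun x => f x - T).
  assert (Hh : Cn h).
  { split. - intros x. unfold h. specialize (HT x). lra.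
    - apply (harm_ext (fun x => 1 * f x + (-T) * 1)); [apply harm_lin; [auto|apply harm_const]|].
      intros; unfold h; lra. }
  assert (Hhnz : exists x, h x <> 0).
  { apply NNPP; intro N. apply Hxy.
    assert (forall x, f x = T). { intros x. apply NNPP; intro N2. apply N. exists x. unfold h. lra. }
    rewrite !H. auto. }
  destruct (ext_exists n h Hh Hhnz) as [e [He Hin]].
  { intros m' fs Hf' Hi. apply (HB m' fs); auto. intros i Hi'. apply Hf'. auto. }
  destruct (inF_nonneg_c h e Hh Hin) as [c [Hc0 Hc]].
  pose proof (ext_const n e HB He) as Hconst.
  pose proof (Ext_pos e He one) as He1.
  assert (Hcp : 0 < c). { specialize (Hc one). pose proof (proj1 Hh one). destruct (Req_dec c 0); [|lra].
    subst. lra. }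
  assert (HE' : E (T + e one / c)).
  { intros x. specialize (Hc x). rewrite Hconst in Hc. unfold h in Hc.
    apply (Rmult_le_reg_l c); auto. unfold Rdiv. field_simplify; [|lra]. lra. }
  specialize (HT1 _ HE'). assert (0 < e one / c) by (apply Rdiv_lt_0_compat; auto). lra. Qed.

End Main.

Theorem proposition8p3 (G : Type) (mul : G -> G -> G) (one : G) (inv : G -> G)
  (mu : G -> R) :
  is_group G mul one inv ->
  fin_supp_prob mu ->
  symmetric_measure inv mu ->
  generating mul one mu ->
  (exists f : G -> R, pos_harmonic mul mu f /\ exists x y, f x <> f y) ->
  forall n : nat, exists fs : nat -> G -> R,
    (forall i, (i < n)%nat -> pos_harmonic mul mu (fs i)) /\ lin_indep n fs.
Proof.
  intros Hg [Hpos [S0 [Hsupp Hsum]]] Hsym Hgen Hf n.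
  exact (main_core mul one inv mu S0 Hg Hpos Hsupp Hsum Hsym Hgen n Hf).
Qed.
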